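(* Suppose $d=2$ and let $\lambda\in\mathbb R$. Then $L,(L^*+\lambda)^2$ is a Leonard pair on $\mathcal P_d(\mathbb R)$ if and only if $r\neq s$ and $2(\lambda+1)\in\left\{\frac{r-s}{r+s+2},\frac{s-r}{r+s+4}\right\}$.
   Context: Let $r,s\in(-1,\infty)$. Write $(x)_i=x(x+1)\cdots(x+i-1)$, $(x)_0=1$. For $0\le i\le d$ put $\theta_i=(d-i)(d-i+r+s+1)$ (distinct) and $\theta^*_i=i$. Put $b^*_i=\frac{(d-i)(i-d-s)(2d-2i+r+s+2)_i}{(2d-2i+r+s)_{i+1}}$ ($0\le i\le d-1$), $c^*_i=\frac{i(i-d-r-1)(d-i+r+s+1)_{d-i}}{(d-i+r+s+2)_{d-i+1}}$ ($1\le i\le d$), $b^*_d=c^*_0=0$, and $a^*_i=\theta^*_0-b^*_i-c^*_i$. Let $\mathcal P_d(\mathbb R)$ be the real polynomials of degree at most $d$, each determined by its values at $\theta_0,\dots,\theta_d$. Let $L,L^*$ be the linear maps on $\mathcal P_d(\mathbb R)$ with $(Lf)(\theta_i)=\theta_i f(\theta_i)$ and $(L^*f)(\theta_i)=b^*_i f(\theta_{i+1})+a^*_i f(\theta_i)+c^*_i f(\theta_{i-1})$ ($0\le i\le d$; terms with coefficient $b^*_d$ or $c^*_0$ omitted); $\lambda$ stands for $\lambda$ times the identity. A square matrix is irreducible tridiagonal if its nonzero entries lie on the diagonal, subdiagonal or superdiagonal and all subdiagonal and superdiagonal entries are nonzero. A Leonard pair on a nonzero finite-dimensional vector space $V$ is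 an ordered pair $A,A^*$ of linear maps on $V$ such that there is an ordered basis in which $A$ is diagonal and $A^*$ is irreducible tridiagonal, and there is an ordered basis in which $A^*$ is diagonal and $A$ is irreducible tridiagonal. *)

(* Defs.v *)
From mathcomp Require Import all_boot all_order all_algebra.
From mathcomp Require Import reals.
Set Implicit Arguments. Unset Strict Implicit. Unset Printing Implicit Defensive.
Import Order.TTheory GRing.Theory Num.Theory.
Local Open Scope ring_scope.

Definition poch {R : ringType} (x : R) (i : nat) : R :=
  \prod_(k < i) (x + k%:R).

Section Data.
Variables (R : realType) (d : nat) (r s : R).

Definition theta (i : nat) : R :=
  (d%:R - i%:R) * (d%:R - i%:R + r + s + 1).

Definition thetaS (i : nat) : R := i%:R.

Definition bS (i : nat) : R :=
  if (i < d)%N then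
    (d%:R - i%:R) * (i%:R - d%:R - s)
    * poch (2 * d%:R - 2 * i%:R + r + s + 2) i
    / poch (2 * d%:R - 2 * i%:R + r + s) i.+1
  else 0.

Definition cS (i : nat) : R :=
  if (0 < i)%N then
    i%:R * (i%:R - d%:R - r - 1)
    * poch (d%:R - i%:R + r + s + 1) (d - i)
    / poch (d%:R - i%:R + r + s + 2) (d - i).+1
  else 0.

Definition aS (i : nat) : R := thetaS 0 - bS i - cS i.

(* P_d(R) is identified with R^{d+1} via f |-> (f(theta_0), ..., f(theta_d))
   (the coordinates of f in the Lagrange basis at the distinct theta_i).
   Matrices act on column vectors.  *)

Definition Lmx : 'M[R]_d.+1 := \matrix_(i, j) (if i == j then theta i else 0).

Definition LSmx : 'M[R]_d.+1 :=
  \matrix_(i, j)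
    (if (j == i.+1 :> nat) then bS i
     else if (j == i :> nat) then aS i
     else if (j.+1 == i :> nat) then cS i
     else 0).

End Data.

Definition irred_tridiag {R : ringType} {n : nat} (M : 'M[R]_n) : Prop :=
  (forall i j : 'I_n, (i.+1 < j)%N \/ (j.+1 < i)%N -> M i j = 0) /\
  (forall i j : 'I_n, (i.+1 == j :> nat) -> M i j != 0 /\ M j i != 0).

Definition diagonal {R : ringType} {n : nat} (M : 'M[R]_n) : Prop :=
  forall i j : 'I_n, i != j -> M i j = 0.

(* Leonard pair on R^n (n > 0), for linear maps given by their matrices A, B
   in the standard basis: an ordered basis is the sequence of columns of an
   invertible matrix P, in which the maps have matrices invmx P *m A *m P. *)
Definition leonard_pair {R : fieldType} {n : nat} (A B : 'M[R]_n.+1) : Prop :=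
  (exists P : 'M[R]_n.+1, P \in unitmx /\
     diagonal (invmx P *m A *m P) /\ irred_tridiag (invmx P *m B *m P)) /\
  (exists Q : 'M[R]_n.+1, Q \in unitmx /\
     diagonal (invmx Q *m B *m Q) /\ irred_tridiag (invmx Q *m A *m Q)).

(* Main.v *)
Require Import Defs.
From mathcomp Require Import all_boot all_order all_algebra.
From mathcomp Require Import reals.
From mathcomp Require Import fingroup perm.
From mathcomp Require Import ring lra.
Set Implicit Arguments. Unset Strict Implicit. Unset Printing Implicit Defensive.
Import Order.TTheory GRing.Theory Num.Theory.
Local Open Scope ring_scope.


Definition mx3 (R : realType) (e : nat -> nat -> R) : 'M[R]_3 := \matrix_(i, j) e i j.
Definition mul3 (R : realType) (e f : nat -> nat -> R) : nat -> nat -> R :=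
  fun i j => e i 0 * f 0 j + e i 1 * f 1 j + e i 2 * f 2 j.

Lemma mx3_mul (R : realType) (e f : nat -> nat -> R) : mx3 e *m mx3 f = mx3 (mul3 e f).
Proof.
apply/matrixP => i j; rewrite !mxE !big_ord_recr big_ord0 /= !mxE add0r /mul3 //.
Qed.

Lemma mx3_eq (R : realType) (e f : nat -> nat -> R) :
  (forall i j, (i < 3)%N -> (j < 3)%N -> e i j = f i j) -> mx3 e = mx3 f.
Proof. by move=> H; apply/matrixP => i j; rewrite !mxE H. Qed.

Lemma ord3P (P : 'I_3 -> Prop) : P ord0 -> P (inord 1) -> P (inord 2) -> forall i, P i.
Proof.
move=> h0 h1 h2 [[|[|[|i]]] hi].
- by rewrite (_ : Ordinal hi = ord0) //; apply: val_inj.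
- by rewrite (_ : Ordinal hi = inord 1) //; apply: val_inj; rewrite /= inordK.
- by rewrite (_ : Ordinal hi = inord 2) //; apply: val_inj; rewrite /= inordK.
- by [].
Qed.

Definition b0 (R : realType) (r s : R) := - 2 * (s + 2) / (r + s + 4).
Definition b1 (R : realType) (r s : R) := - (s + 1) * (r + s + 4) / ((r + s + 2) * (r + s + 3)).
Definition c1 (R : realType) (r s : R) := - (r + 2) * (r + s + 2) / ((r + s + 3) * (r + s + 4)).
Definition c2 (R : realType) (r s : R) := - 2 * (r + 1) / (r + s + 2).
Definition a0 (R : realType) (r s : R) := - b0 r s.
Definition a1 (R : realType) (r s : R) := - b1 r s - c1 r s.
Definition a2 (R : realType) (r s : R) := - c2 r s.

Ltac nz := repeat (apply/andP; split); apply/eqP => ?; nra.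

Lemma bS0 (R : realType) (r s : R) : -1 < r -> -1 < s -> bS 2 r s 0 = b0 r s.
Proof. move=> hr hs; rewrite /bS /poch /b0 /= !big_ord_recr !big_ord0 /= ?(subnn, subn0, subSS); field; nz. Qed.
Lemma bS1 (R : realType) (r s : R) : -1 < r -> -1 < s -> bS 2 r s 1 = b1 r s.
Proof. move=> hr hs; rewrite /bS /poch /b1 /= !big_ord_recr !big_ord0 /= ?(subnn, subn0, subSS); field; nz. Qed.
Lemma bS2 (R : realType) (r s : R) : bS 2 r s 2 = 0.
Proof. by []. Qed.
Lemma cS0 (R : realType) (r s : R) : cS 2 r s 0 = 0.
Proof. by []. Qed.
Lemma cS1 (R : realType) (r s : R) : -1 < r -> -1 < s -> cS 2 r s 1 = c1 r s.
Proof. move=> hr hs; rewrite /cS /poch /c1 /= !big_ord_recr !big_ord0 /= ?(subnn, subn0, subSS); field; nz. Qed.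
Lemma cS2 (R : realType) (r s : R) : -1 < r -> -1 < s -> cS 2 r s 2 = c2 r s.
Proof. move=> hr hs; rewrite /cS /poch /c2 /= !big_ord_recr !big_ord0 /= ?(subnn, subn0, subSS); field; nz. Qed.

Definition LSv (R : realType) (r s : R) (i j : nat) : R :=
  match i, j with
  | 0, 0 => a0 r s | 0, 1 => b0 r s
  | 1, 0 => c1 r s | 1, 1 => a1 r s | 1, 2 => b1 r s
  | 2, 1 => c2 r s | 2, 2 => a2 r s
  | _, _ => 0 end.

Lemma LS_eq (R : realType) (r s : R) : -1 < r -> -1 < s -> LSmx 2 r s = mx3 (LSv r s).
Proof.
move=> hr hs; apply/matrixP => i j; rewrite !mxE.
case: i => [[|[|[|i]]] hi] //; case: j => [[|[|[|j]]] hj] //=;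
  rewrite /aS /thetaS ?bS0 ?bS1 ?bS2 ?cS0 ?cS1 ?cS2 // /a0 /a1 /a2; ring.
Qed.

Definition th3 (R : realType) (r s : R) (i : nat) : R :=
  match i with 0 => 2 * (r + s + 3) | 1 => r + s + 2 | _ => 0 end.

Lemma L_eq (R : realType) (r s : R) :
  Lmx 2 r s = mx3 (fun i j => if i == j then th3 r s i else 0).
Proof.
apply/matrixP => i j; rewrite !mxE.
case: i => [[|[|[|i]]] hi] //; case: j => [[|[|[|j]]] hj] //=; rewrite /theta; ring.
Qed.

Definition Mv (R : realType) (r s l : R) (i j : nat) : R :=
  LSv r s i j + (if i == j then l else 0).

Lemma M_eq (R : realType) (r s l : R) : -1 < r -> -1 < s ->
  LSmx 2 r s + l%:M = mx3 (Mv r s l).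
Proof.
move=> hr hs; rewrite LS_eq //; apply/matrixP => i j; rewrite !mxE /Mv.
have -> : (i == j) = (nat_of_ord i == nat_of_ord j) by [].
by case: (_ == _); rewrite ?mulr1n ?mulr0n.
Qed.

Definition Qv (R : realType) (r s : R) (i j : nat) : R :=
  match i with
  | 0 => 1
  | 1 => (j%:R - a0 r s) / b0 r s
  | 2 => ((j%:R - a1 r s) * ((j%:R - a0 r s) / b0 r s) - c1 r s) / b1 r s
  | _ => 0 end.

Definition D1v (R : realType) (l : R) (i j : nat) : R :=
  if i == j then j%:R + l else 0.

Ltac unf := unfold mul3, Mv, LSv, Qv, D1v, a0, a1, a2, b0, b1, c1, c2; simpl.

Lemma MQ (R : realType) (r s l : R) : -1 < r -> -1 < s ->
  mx3 (Mv r s l) *m mx3 (Qv r s) = mx3 (Qv r s) *m mx3 (D1v l).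
Proof.
move=> hr hs; rewrite !mx3_mul; apply: mx3_eq.
move=> [|[|[|i]]] [|[|[|j]]] // _ _; unf; field; nz.
Qed.

Definition Av (R : realType) (r s : R) (i j : nat) : R := if i == j then th3 r s i else 0.
Definition Tv (R : realType) (r s : R) (i j : nat) : R :=
  match i, j with
  | 0, 0 => 2 * (r + 1) | 0, 1 => r + 1
  | 1, 0 => 2 * (s + 2) | 1, 1 => r + s + 4 | 1, 2 => 2 * (r + 2)
  | 2, 1 => s + 1 | 2, 2 => 2 * (s + 1)
  | _, _ => 0 end.

Lemma AQ (R : realType) (r s : R) : -1 < r -> -1 < s ->
  mx3 (Av r s) *m mx3 (Qv r s) = mx3 (Qv r s) *m mx3 (Tv r s).
Proof.
move=> hr hs; rewrite !mx3_mul; apply: mx3_eq.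
move=> [|[|[|i]]] [|[|[|j]]] // _ _; unfold Av, Tv, th3; unf; field; nz.
Qed.

Definition det3 (R : realType) (e : nat -> nat -> R) : R :=
  e 0 0 * (e 1 1 * e 2 2 - e 1 2 * e 2 1) - e 0 1 * (e 1 0 * e 2 2 - e 1 2 * e 2 0)
  + e 0 2 * (e 1 0 * e 2 1 - e 1 1 * e 2 0).
Definition adj3 (R : realType) (e : nat -> nat -> R) (i j : nat) : R :=
  match i, j with
  | 0, 0 => e 1 1 * e 2 2 - e 1 2 * e 2 1
  | 0, 1 => - (e 0 1 * e 2 2 - e 0 2 * e 2 1)
  | 0, 2 => e 0 1 * e 1 2 - e 0 2 * e 1 1
  | 1, 0 => - (e 1 0 * e 2 2 - e 1 2 * e 2 0)
  | 1, 1 => e 0 0 * e 2 2 - e 0 2 * e 2 0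
  | 1, 2 => - (e 0 0 * e 1 2 - e 0 2 * e 1 0)
  | 2, 0 => e 1 0 * e 2 1 - e 1 1 * e 2 0
  | 2, 1 => - (e 0 0 * e 2 1 - e 0 1 * e 2 0)
  | 2, 2 => e 0 0 * e 1 1 - e 0 1 * e 1 0
  | _, _ => 0 end.

Lemma id3 (R : realType) : (1%:M : 'M[R]_3) = mx3 (fun i j => (i == j)%:R).
Proof. by apply/matrixP => i j; rewrite !mxE. Qed.

Lemma unit3 (R : realType) (e : nat -> nat -> R) : det3 e != 0 -> mx3 e \in unitmx.
Proof.
move=> hd; suff: mx3 e *m mx3 (fun i j => adj3 e i j / det3 e) = 1%:M.
  by case/mulmx1_unit.
rewrite mx3_mul id3; apply: mx3_eq.
move=> [|[|[|i]]] [|[|[|j]]] // _ _; move: hd; rewrite /mul3 /adj3 /det3 /= => hd; field => //.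
Qed.

Lemma detQ (R : realType) (r s : R) : -1 < r -> -1 < s -> det3 (Qv r s) != 0.
Proof.
move=> hr hs; apply/eqP => h.
have : det3 (Qv r s) * (b0 r s ^+ 2 * b1 r s) = 2.
  rewrite /det3; unf; field; nz.
by rewrite h mul0r => /eqP; rewrite eq_sym pnatr_eq0.
Qed.

Definition X (R : realType) (r s l : R) := a0 r s + a1 r s + 2 * l.
Definition Y (R : realType) (r s l : R) := a1 r s + a2 r s + 2 * l.

Lemma B01 (R : realType) (r s l : R) : mul3 (Mv r s l) (Mv r s l) 0 1 = b0 r s * X r s l.
Proof. rewrite /X; unf; ring. Qed.
Lemma B10 (R : realType) (r s l : R) : mul3 (Mv r s l) (Mv r s l) 1 0 = c1 r s * X r s l.
Proof. rewrite /X; unf; ring. Qed.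
Lemma B12 (R : realType) (r s l : R) : mul3 (Mv r s l) (Mv r s l) 1 2 = b1 r s * Y r s l.
Proof. rewrite /Y; unf; ring. Qed.
Lemma B21 (R : realType) (r s l : R) : mul3 (Mv r s l) (Mv r s l) 2 1 = c2 r s * Y r s l.
Proof. rewrite /Y; unf; ring. Qed.
Lemma B02 (R : realType) (r s l : R) : mul3 (Mv r s l) (Mv r s l) 0 2 = b0 r s * b1 r s.
Proof. unf; ring. Qed.
Lemma B20 (R : realType) (r s l : R) : mul3 (Mv r s l) (Mv r s l) 2 0 = c2 r s * c1 r s.
Proof. unf; ring. Qed.

Lemma b0F (R : realType) (r s : R) : -1 < r -> -1 < s -> (b0 r s == 0) = false.
Proof.
move=> hr hs; apply/negbTE/eqP => h.
have : b0 r s * (r + s + 4) = - 2 * (s + 2) by rewrite /b0; field; nz.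
rewrite h mul0r => /eqP; rewrite eq_sym; apply/negP; apply/eqP => ?; nra.
Qed.
Lemma b1F (R : realType) (r s : R) : -1 < r -> -1 < s -> (b1 r s == 0) = false.
Proof.
move=> hr hs; apply/negbTE/eqP => h.
have : b1 r s * ((r + s + 2) * (r + s + 3)) = - (s + 1) * (r + s + 4) by rewrite /b1; field; nz.
rewrite h mul0r => /eqP; rewrite eq_sym; apply/negP; apply/eqP => ?; nra.
Qed.
Lemma c1F (R : realType) (r s : R) : -1 < r -> -1 < s -> (c1 r s == 0) = false.
Proof.
move=> hr hs; apply/negbTE/eqP => h.
have : c1 r s * ((r + s + 3) * (r + s + 4)) = - (r + 2) * (r + s + 2) by rewrite /c1; field; nz.
rewrite h mul0r => /eqP; rewrite eq_sym; apply/negP; apply/eqP => ?; nra.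
Qed.
Lemma c2F (R : realType) (r s : R) : -1 < r -> -1 < s -> (c2 r s == 0) = false.
Proof.
move=> hr hs; apply/negbTE/eqP => h.
have : c2 r s * (r + s + 2) = - 2 * (r + 1) by rewrite /c2; field; nz.
rewrite h mul0r => /eqP; rewrite eq_sym; apply/negP; apply/eqP => ?; nra.
Qed.

Arguments b0 : simpl never.
Arguments b1 : simpl never.
Arguments c1 : simpl never.
Arguments c2 : simpl never.
Arguments X : simpl never.
Arguments Y : simpl never.
Arguments mul3 : simpl never.

Ltac fin := repeat match goal with | h : is_true (?a != 0) |- _ => move/eqP in h end; tauto.

Lemma mulnzl (R : realType) (a t : R) : (a == 0) = false -> (a * t == 0) = (t == 0).
Proof. by move=> h; rewrite mulf_eq0 h. Qed.

Lemma combin (R : realType) (r s l : R) (x y z : nat) : -1 < r -> -1 < s ->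
  (x < 3)%N -> (y < 3)%N -> (z < 3)%N -> x != z -> x != y -> y != z ->
  mul3 (Mv r s l) (Mv r s l) x z = 0 ->
  mul3 (Mv r s l) (Mv r s l) x y != 0 ->
  mul3 (Mv r s l) (Mv r s l) y z != 0 ->
  (X r s l = 0 \/ Y r s l = 0) /\ ~ (X r s l = 0 /\ Y r s l = 0).
Proof.
move=> hr hs.
have F0 := mulnzl _ (b0F hr hs); have F1 := mulnzl _ (b1F hr hs).
have F2 := mulnzl _ (c1F hr hs); have F3 := mulnzl _ (c2F hr hs).
have G0 := b0F hr hs; have G1 := b1F hr hs; have G2 := c1F hr hs; have G3 := c2F hr hs.
case: (eqVneq (X r s l) 0) => hx; case: (eqVneq (Y r s l) 0) => hy;
move: x y z => [|[|[|x]]] [|[|[|y]]] [|[|[|z]]] //= _ _ _ _ _ _ /eqP H1 H2 H3;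
rewrite ?B01 ?B10 ?B12 ?B21 ?B02 ?B20 in H1 H2 H3;
move: H1 H2 H3; rewrite ?F0 ?F1 ?F2 ?F3 ?G0 ?G1 ?G2 ?G3 ?hx ?hy ?eqxx ?(negbTE hx) ?(negbTE hy) //=; try fin.
Qed.

Lemma final (R : realType) (r s l : R) : -1 < r -> -1 < s ->
  ((X r s l = 0 \/ Y r s l = 0) /\ ~ (X r s l = 0 /\ Y r s l = 0)) <->
  (r != s /\ (2 * (l + 1) = (r - s) / (r + s + 2) \/ 2 * (l + 1) = (s - r) / (r + s + 4))).
Proof.
move=> hr hs.
have hX : X r s l = 2 * (l + 1) - (r - s) / (r + s + 2).
  rewrite /X /a0 /a1 /b0 /b1 /c1; field; nz.
have hY : Y r s l = 2 * (l + 1) - (s - r) / (r + s + 4).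
  rewrite /Y /a1 /a2 /b1 /c1 /c2; field; nz.
have pq : (r - s) / (r + s + 2) = (s - r) / (r + s + 4) -> r = s.
  move=> e.
  have : (r - s) * (2 * r + 2 * s + 6) = 0.
    have -> : (r - s) * (2 * r + 2 * s + 6) =
      ((r - s) / (r + s + 2) - (s - r) / (r + s + 4)) * ((r + s + 2) * (r + s + 4)).
      field; nz.
    by rewrite e subrr mul0r.
  move/eqP; rewrite mulf_eq0 => /orP [/eqP h|/eqP h]; nra.
rewrite hX hY; set u := 2 * (l + 1); set p := (r - s) / _; set q := (s - r) / _.
have pq0 : r = s -> p = q by move=> e; rewrite /p /q e !subrr !mul0r.
split.
- move=> [h1 h2]; split.
    apply/eqP => e; apply: h2; move: h1; rewrite (pq0 e).
    by case=> /eqP; rewrite subr_eq0 => /eqP ->; rewrite subrr.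
  by case: h1 => /eqP; rewrite subr_eq0 => /eqP ->; [left|right].
- move=> [/eqP rs [->|->]]; rewrite subrr; split; auto.
  + case=> _ h; apply: rs; apply: pq; by move/eqP: h; rewrite subr_eq0 => /eqP.
  + case=> h _; apply: rs; apply: pq; by move/eqP: h; rewrite subr_eq0 eq_sym => /eqP.
Qed.

Lemma diag3 (R : realType) (e : nat -> nat -> R) :
  (forall i j, (i < 3)%N -> (j < 3)%N -> i != j -> e i j = 0) -> diagonal (mx3 e).
Proof. by move=> H i j ij; rewrite mxE; apply: H. Qed.

Lemma tri3 (R : realType) (e : nat -> nat -> R) :
  e 0 2 = 0 -> e 2 0 = 0 -> e 0 1 != 0 -> e 1 0 != 0 -> e 1 2 != 0 -> e 2 1 != 0 ->
  irred_tridiag (mx3 e).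
Proof.
move=> h02 h20 h01 h10 h12 h21; split.
  move=> [[|[|[|i]]] hi] [[|[|[|j]]] hj] //= []; rewrite !mxE //.
move=> [[|[|[|i]]] hi] [[|[|[|j]]] hj] //= _; rewrite !mxE //.
Qed.

Definition Pv (f : nat -> nat) (R : realType) (i j : nat) : R := if i == f j then 1 else 0.
Definition sw12 (i : nat) : nat := match i with 1 => 2 | 2 => 1 | k => k end.
Definition sw01 (i : nat) : nat := match i with 0 => 1 | 1 => 0 | k => k end.

Lemma Pconj12 (R : realType) (e : nat -> nat -> R) :
  mx3 (Pv sw12 R) *m mx3 e *m mx3 (Pv sw12 R) = mx3 (fun i j => e (sw12 i) (sw12 j)).
Proof.
rewrite !mx3_mul; apply: mx3_eq => [[|[|[|i]]] [|[|[|j]]]] // _ _;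
  unfold mul3, Pv; simpl; ring.
Qed.
Lemma Pconj01 (R : realType) (e : nat -> nat -> R) :
  mx3 (Pv sw01 R) *m mx3 e *m mx3 (Pv sw01 R) = mx3 (fun i j => e (sw01 i) (sw01 j)).
Proof.
rewrite !mx3_mul; apply: mx3_eq => [[|[|[|i]]] [|[|[|j]]]] // _ _;
  unfold mul3, Pv; simpl; ring.
Qed.
Lemma Pinv12 (R : realType) : mx3 (Pv sw12 R) \in unitmx /\ invmx (mx3 (Pv sw12 R)) = mx3 (Pv sw12 R).
Proof.
have h : mx3 (Pv sw12 R) *m mx3 (Pv sw12 R) = 1%:M.
  rewrite mx3_mul id3; apply: mx3_eq => [[|[|[|i]]] [|[|[|j]]]] // _ _; unfold mul3, Pv; simpl; ring.
have [u _] := mulmx1_unit h; split => //.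
by rewrite -[LHS]mulmx1 -h mulmxA mulVmx // mul1mx.
Qed.
Lemma Pinv01 (R : realType) : mx3 (Pv sw01 R) \in unitmx /\ invmx (mx3 (Pv sw01 R)) = mx3 (Pv sw01 R).
Proof.
have h : mx3 (Pv sw01 R) *m mx3 (Pv sw01 R) = 1%:M.
  rewrite mx3_mul id3; apply: mx3_eq => [[|[|[|i]]] [|[|[|j]]]] // _ _; unfold mul3, Pv; simpl; ring.
have [u _] := mulmx1_unit h; split => //.
by rewrite -[LHS]mulmx1 -h mulmxA mulVmx // mul1mx.
Qed.
Lemma sum_one (R : realType) n (F : 'I_n -> R) i0 :
  (forall i, i != i0 -> F i = 0) -> \sum_i F i = F i0.
Proof. by move=> H; rewrite (bigD1 i0) //= big1 ?addr0 // => i /H. Qed.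
Arguments sum_one {R n} F i0 _.

Lemma perm_struct (R : realType) n (A B P : 'M[R]_n.+1) (th : 'I_n.+1 -> R) :
  injective th -> (forall i j, A i j = if i == j then th i else 0) ->
  P \in unitmx -> diagonal (invmx P *m A *m P) ->
  exists (sg : {perm 'I_n.+1}) (u v : 'I_n.+1 -> R),
    (forall k, u k != 0) /\ (forall k, v k != 0) /\
    forall k j, (invmx P *m B *m P) k j = u k * B (sg k) (sg j) * v j.
Proof.
move=> thI Ae Pu Dd.
set Q := invmx P; set D := Q *m A *m P.
have PD : P *m D = A *m P by rewrite /D -mulmxA mulKVmx.
have {}Dd : diagonal D by [].
clearbody D.
have key : forall i j, P i j * D j j = th i * P i j.
  move=> i j; move/matrixP: PD => /(_ i j); rewrite !mxE.
  rewrite (sum_one _ j); last by move=> k kj; rewrite Dd ?mulr0 // eq_sym.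
  rewrite (sum_one _ i); last by move=> k ki; rewrite Ae eq_sym (negbTE ki) mul0r.
  by rewrite Ae eqxx.
have QP : Q *m P = 1%:M by rewrite mulVmx.
have colnz : forall j, exists i, P i j != 0.
  move=> j; case: (boolP [exists i, P i j != 0]) => [/existsP //|].
  rewrite negb_exists => /forallP H; exfalso.
  move/matrixP: QP => /(_ j j); rewrite !mxE eqxx big1 /=.
    by move/eqP; rewrite eq_sym oner_eq0.
  by move=> i _; move: (H i); rewrite negbK => /eqP ->; rewrite mulr0.
pose sgf j := odflt j [pick i | P i j != 0].
have Psg : forall j, P (sgf j) j != 0.
  move=> j; rewrite /sgf; case: pickP => [i //|]; case: (colnz j) => i hi /(_ i).
  by rewrite hi.
have thD : forall i j, P i j != 0 -> th i = D j j.
  by move=> i j nz; apply: (mulIf nz); rewrite -key mulrC.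
have Pz : forall i j, i != sgf j -> P i j = 0.
  move=> i j ij; apply/eqP; apply: contraR ij => nz; apply/eqP; apply: thI.
  by rewrite (thD _ _ nz) (thD _ _ (Psg j)).
have QPe : forall k j, Q k (sgf j) * P (sgf j) j = (k == j)%:R.
  move=> k j; move/matrixP: QP => /(_ k j); rewrite !mxE.
  rewrite (sum_one _ (sgf j)) // => i /Pz ->; by rewrite mulr0.
have Qnz : forall j, Q j (sgf j) != 0.
  by move=> j; apply/eqP => h; move: (QPe j j); rewrite h mul0r eqxx => /eqP; rewrite eq_sym oner_eq0.
have sgI : injective sgf.
  move=> j j' e; apply/eqP; move: (QPe j j'); rewrite -e.
  case: eqP => // _ /eqP; rewrite mulf_eq0 (negbTE (Qnz j)) /=.
  by rewrite e (negbTE (Psg j')).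
pose sg := perm sgI.
have sgE : forall j, sg j = sgf j by move=> j; rewrite permE.
have Qz : forall k m, m != sg k -> Q k m = 0.
  move=> k m mk; have := QPe k (sg^-1 m)%g; rewrite -sgE permKV.
  case: eqP => [e|_ /eqP]; first by rewrite e permKV eqxx in mk.
  have := Psg (sg^-1 m)%g; rewrite -sgE permKV => h.
  by rewrite mulf_eq0 (negbTE h) orbF => /eqP.
exists sg, (fun k => Q k (sg k)), (fun j => P (sg j) j); split; last split.
- by move=> k; rewrite sgE.
- by move=> k; rewrite sgE.
move=> k j; rewrite mxE (sum_one _ (sg j)); last first.
  by move=> i ij; rewrite Pz ?mulr0 // -sgE.
rewrite mxE (sum_one _ (sg k)); last by move=> i ik; rewrite Qz ?mul0r.
done.
Qed.


Theorem corollary2p11 (R : realType) (r s lambda : R) :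
  -1 < r -> -1 < s ->
  (leonard_pair (Lmx 2 r s)
     ((LSmx 2 r s + lambda%:M) *m (LSmx 2 r s + lambda%:M))
   <->
   (r != s /\
    (2 * (lambda + 1) = (r - s) / (r + s + 2) \/
     2 * (lambda + 1) = (s - r) / (r + s + 4)))).
Proof.
move=> hr hs.
rewrite M_eq // L_eq -(final lambda hr hs).
have LA : mx3 (fun i j => if i == j then th3 r s i else 0) = mx3 (Av r s) by [].
rewrite LA.
set Mm := mx3 (Mv r s lambda).
split.
- case=> [[P [Pu [Dd Td]]] _].
  have thI : injective (fun i : 'I_3 => th3 r s i).
    move=> [[|[|[|i]]] hi] [[|[|[|j]]] hj] //= e; try (by apply: val_inj);
      exfalso; move: e; rewrite /th3 => e; lra.
  have Ae : forall i j : 'I_3, mx3 (Av r s) i j = if i == j then th3 r s i else 0.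
    by move=> i j; rewrite mxE.
  have [sg [u [v [hu [hv hT]]]]] := perm_struct (Mm *m Mm) thI Ae Pu Dd.
  case: Td => Tfar Tnear.
  have h02 := Tfar (@Ordinal 3 0 isT) (@Ordinal 3 2 isT) (or_introl isT).
  have [h01 _] := Tnear (@Ordinal 3 0 isT) (@Ordinal 3 1 isT) isT.
  have [h12 _] := Tnear (@Ordinal 3 1 isT) (@Ordinal 3 2 isT) isT.
  rewrite hT mx3_mul mxE in h02; rewrite hT mx3_mul mxE in h01; rewrite hT mx3_mul mxE in h12.
  have h02' : mul3 (Mv r s lambda) (Mv r s lambda) (sg (@Ordinal 3 0 isT)) (sg (@Ordinal 3 2 isT)) = 0.
    move/eqP: h02; rewrite mulf_eq0 (negbTE (hv _)) orbF mulf_eq0 (negbTE (hu _)) /=.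
    by move/eqP.
  have h01' : mul3 (Mv r s lambda) (Mv r s lambda) (sg (@Ordinal 3 0 isT)) (sg (@Ordinal 3 1 isT)) != 0.
    by apply: contra h01 => /eqP ->; rewrite mulr0 mul0r.
  have h12' : mul3 (Mv r s lambda) (Mv r s lambda) (sg (@Ordinal 3 1 isT)) (sg (@Ordinal 3 2 isT)) != 0.
    by apply: contra h12 => /eqP ->; rewrite mulr0 mul0r.
  apply: (combin hr hs (ltn_ord _) (ltn_ord _) (ltn_ord _) _ _ _ h02' h01' h12').
  + by rewrite (inj_eq val_inj) (inj_eq perm_inj).
  + by rewrite (inj_eq val_inj) (inj_eq perm_inj).
  + by rewrite (inj_eq val_inj) (inj_eq perm_inj).
- move=> H.
  have hF := (b0F hr hs, b1F hr hs, c1F hr hs, c2F hr hs).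
  split.
  + have [[hx hy]|[hy hx]] : (X r s lambda = 0 /\ Y r s lambda <> 0) \/
                              (Y r s lambda = 0 /\ X r s lambda <> 0) by tauto.
    * have [Pu Pi] := Pinv12 R.
      exists (mx3 (Pv sw12 R)); rewrite Pi Pconj12 /Mm mx3_mul Pconj12; split => //; split.
        by apply: diag3 => [[|[|[|i]]] [|[|[|j]]]] // _ _ _; rewrite /Av.
      apply: tri3; rewrite /= ?B01 ?B10 ?B12 ?B21 ?B02 ?B20 ?hx ?mulr0 //;
        rewrite mulf_neq0 ?hF //; by apply/eqP.
    * have [Pu Pi] := Pinv01 R.
      exists (mx3 (Pv sw01 R)); rewrite Pi Pconj01 /Mm mx3_mul Pconj01; split => //; split.
        by apply: diag3 => [[|[|[|i]]] [|[|[|j]]]] // _ _ _; rewrite /Av.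
      apply: tri3; rewrite /= ?B01 ?B10 ?B12 ?B21 ?B02 ?B20 ?hy ?mulr0 //;
        rewrite mulf_neq0 ?hF //; by apply/eqP.
  + exists (mx3 (Qv r s)); split; first exact: unit3 (detQ hr hs).
    have Qu := unit3 (detQ hr hs).
    split.
      rewrite /Mm -!mulmxA MQ // !mulmxA -[_ *m Mm *m _]mulmxA MQ //.
      rewrite -!mulmxA mulKmx // mx3_mul.
      by apply: diag3 => [[|[|[|i]]] [|[|[|j]]]] // _ _ _; unfold mul3, D1v; simpl; ring.
    rewrite -mulmxA AQ // mulKmx //.
    apply: tri3; rewrite /Tv /= //; apply/eqP => ?; lra.
Qed.
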